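(* Let $\mathcal{D}=(\mathcal{P},\mathcal{B},\mathcal{I})$ be a quasi-symmetric $(v,b,r,k,\lambda_1,0)$ SPBIBD of type $(k-1,t)$ with intersection numbers $x=0$ and $y=1$, let $\Gamma$ be its incidence graph, and assume $r\ge3$. Then: (i) $\Gamma$ is almost $2$-$\mathcal{B}$-homogeneous if and only if $\mathcal{D}$ is a generalized quadrangle; (ii) $\Gamma$ is not $2$-$\mathcal{B}$-homogeneous.
   Context: A design $\mathcal{D}=(\mathcal{P},\mathcal{B},\mathcal{I})$ is an incidence structure with $|\mathcal{P}|=v$, $|\mathcal{B}|=b$, every block incident with exactly $k$ points and every point with exactly $r$ blocks; standing assumptions: $v>k$ and $r<b$. $(p,B)$ is a flag if $p\in B$, a non-flag otherwise. $\mathcal{D}$ is a $(v,b,r,k,\lambda_1,\lambda_2)$ SPBIBD of type $(s,t)$ if (i) any two distinct points are together in exactly $\lambda_1$ or exactly $\lambda_2$ blocks; (ii) for every flag $(p,B)$, the number of points of $B$ other than $p$ lying with $p$ in exactly $\lambda_1$ blocks is $s$; (iii) for every non-flag $(p,B)$, the number of points of $B$ lying with $p$ in exactly $\lambda_1$ blocks is $t$. Quasi-symmetric with intersection numbers $x<y$: any two distinct blocks share exactly $x$ or $y$ points, both values occurring. A partial geometry is such a design in which any two points are together in at most one block and there is a constant $t'$ ($1\le t'\le r$, $1\le t'\le k$) such that for every non-flag $(p,B)$ exactly $t'$ blocks are incident with $p$ and meet $B$; it is a generalized quadrangle if $t'=1$. The incidence graph is the bipartite graph on $\mathcal{P}\cup\mathcal{B}$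 with $p\sim B$ iff $p\in B$. $\Gamma_i(u)$ is the set of vertices at distance $i$ from $u$, $\Gamma(u)=\Gamma_1(u)$. For a $(Y,Y')$-bipartite graph in which every vertex of $Y$ has eccentricity $D\ge3$: it is almost $2$-$Y$-homogeneous if for each $1\le i\le D-2$ the number $|\Gamma(x)\cap\Gamma(y)\cap\Gamma_{i-1}(z)|$ is the same for all $x\in Y$, $y\in\Gamma_2(x)$, $z\in\Gamma_i(x)\cap\Gamma_i(y)$; $2$-$Y$-homogeneous if this holds for each $1\le i\le D-1$. Here $Y=\mathcal{B}$. *)

(* Defs.v *)
From mathcomp Require Import all_boot.
Set Implicit Arguments. Unset Strict Implicit. Unset Printing Implicit Defensive.

Section Designs.
Variables (P B : finType) (I : P -> B -> bool).

Definition lambda (p q : P) : nat := #|[set X : B | I p X && I q X]|.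

Definition is_design (v b r k : nat) : Prop :=
  [/\ #|P| = v, #|B| = b,
      (forall X : B, #|[set p : P | I p X]| = k),
      (forall p : P, #|[set X : B | I p X]| = r) &
      k < v /\ r < b].

Definition is_SPBIBD (v b r k lam1 lam2 s t : nat) : Prop :=
  [/\ is_design v b r k,
      (forall p q : P, p != q -> lambda p q = lam1 \/ lambda p q = lam2),
      (forall (p : P) (X : B), I p X ->
          #|[set q : P | [&& I q X, q != p & lambda p q == lam1]]| = s) &
      (forall (p : P) (X : B), ~~ I p X ->
          #|[set q : P | I q X && (lambda p q == lam1)]| = t)].

Definition quasi_symmetric (x y : nat) : Prop :=
  [/\ x < y,
      (forall X Y : B, X != Y ->
          #|[set p : P | I p X && I p Y]| = x \/ #|[set p : P | I p X && I p Y]| = y),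
      (exists X Y : B, X != Y /\ #|[set p : P | I p X && I p Y]| = x) &
      (exists X Y : B, X != Y /\ #|[set p : P | I p X && I p Y]| = y)].

Definition partial_geometry (r k t' : nat) : Prop :=
  [/\ (forall p q : P, p != q -> lambda p q <= 1),
      1 <= t' <= r, 1 <= t' <= k &
      (forall (p : P) (X : B), ~~ I p X ->
          #|[set Z : B | I p Z && [exists q : P, I q Z && I q X]]| = t')].

Definition generalized_quadrangle (r k : nat) : Prop := partial_geometry r k 1.

End Designs.

Definition incidence_adj (P B : finType) (I : P -> B -> bool) : rel (P + B)%type :=
  fun u w => match u, w with
             | inl p, inr X => I p X
             | inr X, inl p => I p X
             | _, _ => false
             end.

Section Graphs.
Variables (V : finType) (adj : rel V).

Fixpoint ball (u : V) (n : nat) : {set V} :=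
  match n with
  | 0 => [set u]
  | n'.+1 => ball u n' :|: [set w | [exists x in ball u n', adj x w]]
  end.

Definition Gamma_i (u : V) (i : nat) : {set V} :=
  ball u i :\: (if i is j.+1 then ball u j else set0).

Definition eccentricity_is (u : V) (D : nat) : Prop :=
  (forall w : V, w \in ball u D) /\ Gamma_i u D != set0.

Definition hom_at (Y : {set V}) (i : nat) : Prop :=
  exists c : nat, forall x y z : V,
    x \in Y -> y \in Gamma_i x 2 -> z \in Gamma_i x i -> z \in Gamma_i y i ->
    #|Gamma_i x 1 :&: Gamma_i y 1 :&: Gamma_i z i.-1| = c.

Definition almost_2_Y_homogeneous (Y : {set V}) : Prop :=
  exists D : nat, 3 <= D /\ (forall x, x \in Y -> eccentricity_is x D) /\
    (forall i, 1 <= i <= D - 2 -> hom_at Y i).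

Definition two_Y_homogeneous (Y : {set V}) : Prop :=
  exists D : nat, 3 <= D /\ (forall x, x \in Y -> eccentricity_is x D) /\
    (forall i, 1 <= i <= D - 1 -> hom_at Y i).

End Graphs.

Definition block_vertices (P B : finType) : {set (P + B)%type} := [set u | if u is inr _ then true else false].

(* Main.v *)
Require Import Defs.
From mathcomp Require Import all_boot zify.
Set Implicit Arguments. Unset Strict Implicit. Unset Printing Implicit Defensive.

Lemma two_le_card (T : finType) (A : {set T}) a b :
  a \in A -> b \in A -> a != b -> 2 <= #|A|.
Proof.
move=> Ha Hb Hab.
have : [set a; b] \subset A by apply/subsetP=> x; rewrite !inE => /orP[]/eqP->.
move/subset_leq_card; rewrite cards2 Hab //.
Qed.

Lemma exists_out (T : finType) (A S : {set T}) :
  #|S| < #|A| -> exists2 c, c \in A & c \notin S.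
Proof.
case: (boolP (A \subset S)) => [/subset_leq_card|/subsetPn []]; last by move=> x H1 H2; exists x.
move=> H1 H2; lia.
Qed.

Lemma card1_eq (T : finType) (A : {set T}) a b :
  #|A| <= 1 -> a \in A -> b \in A -> a = b.
Proof.
move=> H Ha Hb; apply/eqP; apply/negPn/negP => Hab.
have := two_le_card Ha Hb Hab; lia.
Qed.

Lemma card_pick (T : finType) (A : {set T}) : 0 < #|A| -> exists a, a \in A.
Proof. by move=> H; have [c Hc _] := @exists_out T A set0 ltac:(by rewrite cards0); exists c. Qed.

Section Balls.
Variables (P B : finType) (I : P -> B -> bool).
Local Notation adj := (incidence_adj I).
Local Notation ball := (ball adj).

Lemma ballSP u n w : reflect (w \in ball u n \/ exists2 x, x \in ball u n & adj x w)
  (w \in ball u n.+1).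
Proof.
rewrite /= !inE; apply: (iffP orP) => [[H|/existsP [x /andP [H1 H2]]]|[H|[x H1 H2]]].
- by left.
- by right; exists x.
- by left.
- by right; apply/existsP; exists x; rewrite H1.
Qed.

Lemma ball0 u w : (w \in ball u 0) = (w == u).
Proof. by rewrite /= inE. Qed.

Lemma ball_mono u n w : w \in ball u n -> w \in ball u n.+1.
Proof. by move=> H; apply/ballSP; left. Qed.

Lemma bl1 X p : inl p \in ball (inr X) 1 <-> I p X.
Proof.
split.
- case/ballSP => [|[x]]; first by rewrite ball0.
  by rewrite ball0 => /eqP ->.
- by move=> H; apply/ballSP; right; exists (inr X); rewrite ?ball0.
Qed.

Lemma br1 X Y : inr Y \in ball (inr X) 1 <-> Y = X.
Proof.
split.
- case/ballSP => [|[x]]; first by rewrite ball0 => /eqP [].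
  by rewrite ball0 => /eqP ->.
- by move=> ->; apply/ballSP; left; rewrite ball0.
Qed.

Lemma bl2 X p : inl p \in ball (inr X) 2 <-> I p X.
Proof.
split.
- case/ballSP => [/bl1 //|[[q|Y]]] //.
  by move/br1 => -> /=.
- by move=> /bl1 H; apply/ballSP; left.
Qed.

Lemma br2 X Y : inr Y \in ball (inr X) 2 <-> Y = X \/ exists p, I p X /\ I p Y.
Proof.
split.
- case/ballSP => [/br1 -> |[[q|Z]]]; first by left.
  + by move/bl1 => H1 /= H2; right; exists q.
  + by [].
- case=> [->|[p [H1 H2]]]; apply/ballSP.
  + by left; apply/br1.
  + by right; exists (inl p) => //; apply/bl1.
Qed.

Lemma bl3 X q : inl q \in ball (inr X) 3 <->
   I q X \/ exists Z p, [/\ I p X, I p Z & I q Z].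
Proof.
split.
- case/ballSP => [/bl2 |[[p|Z]]]; first by left.
  + by [].
  + case/br2 => [-> /= H|[p [H1 H2]] /= H3]; first by left.
    by right; exists Z, p.
- case=> [H|[Z [p [H1 H2 H3]]]]; apply/ballSP.
  + by left; apply/bl2.
  + by right; exists (inr Z) => //; apply/br2; right; exists p.
Qed.

Lemma br3 X Y : inr Y \in ball (inr X) 3 <-> Y = X \/ exists p, I p X /\ I p Y.
Proof.
split.
- case/ballSP => [/br2 //|[[q|Z]]] //.
  by move/bl2 => H1 /= H2; right; exists q.
- by move/br2 => H; apply/ballSP; left.
Qed.

Lemma br4 X Y q : inl q \in ball (inr X) 3 -> I q Y -> inr Y \in ball (inr X) 4.
Proof. by move=> H1 H2; apply/ballSP; right; exists (inl q). Qed.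

Lemma pl1 q p : inl p \in ball (inl q) 1 <-> p = q.
Proof.
split.
- case/ballSP => [|[x]]; first by rewrite ball0 => /eqP [].
  by rewrite ball0 => /eqP ->.
- by move=> ->; apply/ballSP; left; rewrite ball0.
Qed.

Lemma pr1 q Y : inr Y \in ball (inl q) 1 <-> I q Y.
Proof.
split.
- case/ballSP => [|[x]]; first by rewrite ball0.
  by rewrite ball0 => /eqP ->.
- by move=> H; apply/ballSP; right; exists (inl q); rewrite ?ball0.
Qed.

Lemma pl2 q p : inl p \in ball (inl q) 2 <-> p = q \/ exists Z, I q Z /\ I p Z.
Proof.
split.
- case/ballSP => [/pl1 -> |[[p'|Z]]]; first by left.
  + by [].
  + by move/pr1 => H1 /= H2; right; exists Z.
- case=> [->|[Z [H1 H2]]]; apply/ballSP.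
  + by left; apply/pl1.
  + by right; exists (inr Z) => //; apply/pr1.
Qed.

Lemma G1r X w : (w \in Gamma_i adj (inr X) 1) <-> (if w is inl p then I p X else False).
Proof.
rewrite /Gamma_i inE ball0; case: w => [p|Y].
- split; first by case/andP => _ /bl1.
  by move=> H; apply/andP; split=> //; apply/bl1.
- split=> //; case/andP => /negP H1 /br1 E; apply: H1; rewrite E.
  done.
Qed.

Lemma G0 u w : (w \in Gamma_i adj u 0) = (w == u).
Proof. by rewrite /Gamma_i inE ball0 inE. Qed.

Lemma G2r X w : w \in Gamma_i adj (inr X) 2 <->
  exists Y, [/\ w = inr Y, Y <> X & exists p, I p X /\ I p Y].
Proof.
rewrite /Gamma_i inE; case: w => [p|Y]; split.
- case/andP => /negP H1 /bl2 H2; exfalso; apply: H1; apply/bl1; exact H2.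
- by case=> Y [].
- case/andP => /negP H1 /br2 [E|H]; first by (exfalso; apply: H1; apply/br1; exact E).
  exists Y; split=> // E; apply: H1; apply/br1; exact E.
- case=> Y' [[<-] H1 H2]; apply/andP; split; last by apply/br2; right.
  by apply/negP => /br1.
Qed.

Lemma G3l X q : inl q \in Gamma_i adj (inr X) 3 <->
  ~ I q X /\ exists Z p, [/\ I p X, I p Z & I q Z].
Proof.
rewrite /Gamma_i inE; split.
- case/andP => /negP H1 /bl3 [H|H]; first by (exfalso; apply: H1; apply/bl2; exact H).
  by split=> // H2; apply: H1; apply/bl2; exact H2.
- case=> H1 H2; apply/andP; split; last by apply/bl3; right.
  by apply/negP => /bl2.
Qed.

Lemma G2p q p : inl p \in Gamma_i adj (inl q) 2 <-> p <> q /\ exists Z, I q Z /\ I p Z.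
Proof.
rewrite /Gamma_i inE; split.
- case/andP => /negP H1 /pl2 [E|H]; first by (exfalso; apply: H1; apply/pl1; exact E).
  by split=> // E; apply: H1; apply/pl1; exact E.
- case=> H1 H2; apply/andP; split; last by apply/pl2; right.
  by apply/negP => /pl1.
Qed.

End Balls.

Section Design.
Variables (P B : finType) (I : P -> B -> bool) (v b r k lam1 t : nat).
Hypotheses (HS : is_SPBIBD I v b r k lam1 0 (k - 1) t) (HQ : quasi_symmetric I 0 1) (Hr : 3 <= r).
Local Notation adj := (incidence_adj I).

Lemma blocks_through p : #|[set X | I p X]| = r.
Proof. by case: HS => [[_ _ _ H _] _ _ _]. Qed.

Lemma points_of X : #|[set p | I p X]| = k.
Proof. by case: HS => [[_ _ H _ _] _ _ _]. Qed.

Lemma kv : k < v /\ #|P| = v.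
Proof. by case: HS => [[H1 _ _ _ [H2 _]] _ _ _]. Qed.

Lemma uniq2 X Y p q : X <> Y -> I p X -> I p Y -> I q X -> I q Y -> p = q.
Proof.
move=> XY H1 H2 H3 H4; case: HQ => _ Hc _ _.
apply: (@card1_eq _ [set p | I p X && I p Y]); last by rewrite inE H3.
- by case: (Hc X Y (introN eqP XY)) => ->.
- by rewrite inE H1.
Qed.

Lemma other_block p (S : {set B}) : #|S| < 3 -> exists2 Y, I p Y & Y \notin S.
Proof.
move=> H; have [Y] := @exists_out _ [set Y | I p Y] S ltac:(rewrite blocks_through; lia).
by rewrite inE => H1 H2; exists Y.
Qed.

Lemma other_point X (S : {set P}) : #|S| < k -> exists2 q, I q X & q \notin S.
Proof.
move=> H; have [q] := @exists_out _ [set q | I q X] S ltac:(rewrite points_of; lia).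
by rewrite inE => H1 H2; exists q.
Qed.

Lemma point_off X : exists q, ~~ I q X.
Proof.
case: kv => H1 H2.
have [q _] := @exists_out _ [set: P] [set q | I q X] ltac:(rewrite cardsT points_of; lia).
by rewrite inE => H; exists q.
Qed.

Lemma a_point : exists p : P, true.
Proof.
case: kv => H1 H2.
have [q _ _] := @exists_out _ [set: P] set0 ltac:(rewrite cardsT cards0; lia).
by exists q.
Qed.

Lemma k_ge1 : 1 <= k.
Proof.
have [p _] := a_point.
have [X HX _] := @other_block p set0 ltac:(by rewrite cards0).
rewrite -(points_of X); apply/card_gt0P; exists p; by rewrite inE.
Qed.

Lemma lam_pos p q : 0 < lambda I p q -> exists Z, I p Z /\ I q Z.
Proof. by move/card_gt0P => [Z]; rewrite inE => /andP [H1 H2]; exists Z. Qed.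

Lemma lam_ge1 p q Z : I p Z -> I q Z -> 0 < lambda I p q.
Proof. by move=> H1 H2; apply/card_gt0P; exists Z; rewrite inE H1 H2. Qed.

Lemma k1_no_ecc : k <= 1 -> forall X D, ~ eccentricity_is adj (inr X) D.
Proof.
move=> Hk X D [Hall _].
have Hk1 := k_ge1.
have [p] := @card_pick _ [set p | I p X] ltac:(rewrite points_of; lia).
rewrite inE => Hp.
have [p' Hp'] := point_off X.
have inv: forall n w, w \in ball adj (inr X) n ->
   (w = inl p) \/ exists Y, w = inr Y /\ I p Y.
  elim=> [|n IH] w; first by rewrite ball0 => /eqP ->; right; exists X.
  case/ballSP => [/IH //|[x /IH Hx Ha]].
  case: Hx Ha => [->|[Y [-> HY]]]; case: w => [q|Z] //= Ha.
  - by right; exists Z.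
  - left; congr inl; apply: (@card1_eq _ [set p | I p Y]); rewrite ?inE //.
    by rewrite points_of.
case: (inv D (inl p') (Hall _)) => [[E]|[Y [E _]]] //.
by move: Hp'; rewrite E Hp.
Qed.

Lemma t_pos : 2 <= k -> 0 < t /\ 0 < lam1.
Proof.
move=> Hk.
have [p0 _] := a_point.
have [X0 HX0 _] := @other_block p0 set0 ltac:(by rewrite cards0).
have Hlam : 0 < lam1.
  case: HS => _ _ Hf _.
  have [q] := @card_pick _ [set q | [&& I q X0, q != p0 & lambda I p0 q == lam1]]
     ltac:(rewrite Hf //; lia).
  rewrite inE => /and3P [H1 H2 /eqP <-]; exact: lam_ge1 HX0 H1.
split=> //.
have [X2 HX2] := @other_block p0 [set X0] ltac:(by rewrite cards1).
rewrite inE => /eqP nX.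
have [q Hq] := @other_point X2 [set p0] ltac:(rewrite cards1; lia).
rewrite inE => /eqP nq.
have nqX0 : ~~ I q X0.
  by apply/negP => H; apply: nq; apply: (uniq2 (X:=X2) (Y:=X0)).
case: HS => _ Hl _ Hn.
rewrite -(Hn _ _ nqX0); apply/card_gt0P; exists p0; rewrite inE HX0 /=.
have := lam_ge1 Hq HX2.
case: (Hl q p0 (introN eqP nq)) => ->; [by rewrite eqxx | by []].
Qed.

Lemma collin : 2 <= k -> forall p X, ~~ I p X -> exists q Z, [/\ I q X, I q Z & I p Z].
Proof.
move=> Hk p X HpX.
have [Ht Hl] := t_pos Hk.
case: HS => _ _ _ Hn.
have [q] := @card_pick _ [set q | I q X && (lambda I p q == lam1)] ltac:(rewrite Hn //).
rewrite inE => /andP [H1 /eqP H2].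
have [Z [H3 H4]] := @lam_pos p q ltac:(lia).
by exists q, Z.
Qed.

End Design.

Lemma count_one (T : finType) (A : {set T}) a : (forall w, w \in A <-> w = a) -> #|A| = 1.
Proof.
move=> H; have ->: A = [set a]; last by rewrite cards1.
by apply/setP => w; rewrite inE; apply/idP/eqP => /H.
Qed.

Lemma count_zero (T : finType) (A : {set T}) : (forall w, w \in A -> False) -> #|A| = 0.
Proof.
move=> H; apply/eqP; rewrite cards_eq0; apply/eqP/setP => w; rewrite inE.
by apply/negP => /H.
Qed.

Lemma in3 (T : finType) (A1 A2 A3 : {set T}) w :
  w \in A1 :&: A2 :&: A3 <-> [/\ w \in A1, w \in A2 & w \in A3].
Proof.
split; first by case/setIP => /setIP [H1 H2] H3.
by case=> H1 H2 H3; rewrite !inE H1 H2 H3.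
Qed.

Section Main.
Variables (P B : finType) (I : P -> B -> bool) (v b r k lam1 t : nat).
Hypotheses (HS : is_SPBIBD I v b r k lam1 0 (k - 1) t) (HQ : quasi_symmetric I 0 1) (Hr : 3 <= r).
Local Notation adj := (incidence_adj I).
Local Notation blocks := (block_vertices P B).

Lemma Dge4 D : (forall x, x \in blocks -> eccentricity_is adj x D) -> 3 <= D -> 4 <= D.
Proof.
move=> Hecc HD; case: HQ => _ _ [X0 [Y0 [nXY H0]]] _.
have [Hall _] := Hecc (inr X0) ltac:(by rewrite inE).
rewrite ltn_neqAle HD andbT; apply/eqP => E.
move: (Hall (inr Y0)); rewrite -E => /br3 [E'|[p [H1 H2]]].
- by move: nXY; rewrite E' eqxx.
- have : 0 < #|[set p | I p X0 && I p Y0]| by apply/card_gt0P; exists p; rewrite inE H1 H2.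
  by rewrite H0.
Qed.

Lemma gq_of_hom2 : 2 <= k -> hom_at adj blocks 2 -> generalized_quadrangle I r k.
Proof.
move=> Hk [c Hc]; split.
- move=> p q /eqP npq; rewrite leqNgt; apply/negP => H2; rewrite /lambda in H2.
  have [X HX] := @card_pick _ [set X | I p X && I q X] ltac:(lia).
  have [Y HY] := @exists_out _ [set X | I p X && I q X] [set X] ltac:(rewrite cards1 //).
  rewrite !inE in HX HY => /eqP nYX.
  case/andP: HX => H1 H3; case/andP: HY => H4 H5.
  by apply: npq; apply: (uniq2 HQ (X:=X) (Y:=Y)) => // E; move: nYX; rewrite E !inE eqxx.
- by apply/andP; split=> //; lia.
- by apply/andP; split=> //; lia.
move=> p X HpX.
have [q1 [Z1 [Hq1X Hq1Z1 HpZ1]]] := collin HS HQ Hr Hk HpX.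
apply: count_one (Z1) _ => Z; rewrite inE; split; last first.
  by move=> ->; rewrite HpZ1 /=; apply/existsP; exists q1; rewrite Hq1Z1 Hq1X.
case/andP => HpZ /existsP [q2 /andP [Hq2Z Hq2X]].
apply/eqP/negPn/negP => /eqP nZ.
have nZ1X : Z1 <> X by move=> E; move: HpX; rewrite -E HpZ1.
have nZX : Z <> X by move=> E; move: HpX; rewrite -E HpZ.
have [W HW] := @other_block _ _ _ _ _ _ _ _ _ HS Hr q1 [set X; Z1] ltac:(have := cards2 X Z1; lia).
rewrite !inE negb_or => /andP [/eqP nWX /eqP nWZ1].
have Hx : inr X \in blocks by rewrite inE.
have Hy : inr Z1 \in Gamma_i adj (inr X) 2.
  by apply/G2r; exists Z1; split=> //; exists q1.
have C1 := Hc _ _ (inr W) Hx Hy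
  ltac:(by apply/G2r; exists W; split=> //; exists q1)
  ltac:(by apply/G2r; exists W; split=> //; exists q1).
have C2 := Hc _ _ (inr Z) Hx Hy
  ltac:(by apply/G2r; exists Z; split=> //; exists q2)
  ltac:(by apply/G2r; exists Z; split=> //; exists p).
rewrite /= in C1 C2.
have E1 : #|Gamma_i adj (inr X) 1 :&: Gamma_i adj (inr Z1) 1 :&: Gamma_i adj (inr W) 1| = 1.
  apply: count_one (inl q1) _ => w; rewrite in3; split.
  - case=> /G1r H1 /G1r H2 /G1r H3; case: w H1 H2 H3 => // p' H1 H2 H3.
    by congr inl; apply: (uniq2 HQ (X:=X) (Y:=Z1)) => //; move=> E; apply: nZ1X.
  - by move=> ->; split; apply/G1r.
have E2 : #|Gamma_i adj (inr X) 1 :&: Gamma_i adj (inr Z1) 1 :&: Gamma_i adj (inr Z) 1| = 0.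
  apply: count_zero => w; rewrite in3.
  case=> /G1r H1 /G1r H2 /G1r H3; case: w H1 H2 H3 => // p' H1 H2 H3.
  have E1' : p' = q1 by apply: (uniq2 HQ (X:=X) (Y:=Z1)) => //; move=> E; apply: nZ1X.
  have E2' : p' = p by apply: (uniq2 HQ (X:=Z1) (Y:=Z)) => // E; apply: nZ.
  by move: HpX; rewrite -E2' H1.
by rewrite C1 in E1; rewrite C2 E1 in E2.
Qed.


Lemma pt_in3 X q : generalized_quadrangle I r k -> ~~ I q X -> inl q \in ball adj (inr X) 3.
Proof.
move=> [_ _ _ Hg] Hq.
have [Z] := @card_pick _ [set Z | I q Z && [exists p, I p Z && I p X]] ltac:(rewrite Hg //).
rewrite inE => /andP [H1 /existsP [p /andP [H2 H3]]].
by apply/bl3; right; exists Z, p.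
Qed.

Lemma hom_of_gq : generalized_quadrangle I r k -> almost_2_Y_homogeneous adj blocks.
Proof.
move=> Hgq; have Hk1 := k_ge1 HS Hr.
have [_ _ _ Hg] := Hgq.
exists 4; split=> //; split.
  move=> x; case: x => [p|X]; rewrite inE // => _; split.
  - move=> w; case: w => [q|Y].
    + do 1 apply: ball_mono; case: (boolP (I q X)) => Hq; last exact: pt_in3.
      by apply/bl3; left.
    + case: (boolP [exists p, I p X && I p Y]) => [/existsP [p /andP [H1 H2]]|Hno].
        by apply: ball_mono; apply/br3; right; exists p.
      have [q] := @card_pick _ [set q | I q Y] ltac:(rewrite (points_of HS); lia).
      rewrite inE => HqY; apply: (br4 (q:=q)) => //; apply: pt_in3 => //.
      apply/negP => HqX; move/negP: Hno; apply; apply/existsP; exists q; by rewrite HqX.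
  - have [q Hq] := point_off HS Hr X.
    have [Z0] := @card_pick _ [set Z | I q Z && [exists p, I p Z && I p X]] ltac:(rewrite Hg //).
    move=> HZ0.
    have [Y HqY] := @other_block _ _ _ _ _ _ _ _ _ HS Hr q [set Z0] ltac:(by rewrite cards1).
    rewrite inE => /eqP nYZ0.
    apply/set0Pn; exists (inr Y); rewrite /Gamma_i inE; apply/andP; split.
    + apply/negP => /br3 [E|[p [H1 H2]]]; first by move: Hq; rewrite -E HqY.
      apply: nYZ0; apply: (@card1_eq _ [set Z | I q Z && [exists p, I p Z && I p X]]).
      * by rewrite Hg.
      * by rewrite inE HqY /=; apply/existsP; exists p; rewrite H1 H2.
      * done.
    + by apply: (br4 (q:=q)) => //; apply: pt_in3.
move=> i /andP [Hi1 Hi2].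
have : i = 1 \/ i = 2 by lia.
case=> ->; exists 1 => x y z; case: x => [p|X]; rewrite inE // => _.
- move=> /G2r [Y [-> nYX [p [HpX HpY]]]].
  case: z => [q|Z] /G1r // HqX /G1r HqY.
  apply: count_one (inl q) _ => w; rewrite in3 G0; split.
  + by case=> _ _ /eqP.
  + by move=> ->; split; rewrite ?eqxx //; apply/G1r.
- move=> /G2r [Y [-> nYX [p [HpX HpY]]]].
  move=> /G2r [Z [-> nZX [a [HaX HaZ]]]] /G2r [Z' [[<-] nZY [bb [HbY HbZ]]]].
  have HpZ : I p Z.
    case: (eqVneq a p) => [<- //| nap].
    have naY : ~~ I a Y.
      by apply/negP => HaY; move/eqP: nap; apply; apply: (uniq2 HQ (X:=X) (Y:=Y)) => // E; apply: nYX.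
    exfalso; apply: nZX; apply: (@card1_eq _ [set Z | I a Z && [exists q, I q Z && I q Y]]).
    * by rewrite Hg.
    * by rewrite inE HaZ /=; apply/existsP; exists bb; rewrite HbZ HbY.
    * by rewrite inE HaX /=; apply/existsP; exists p; rewrite HpX HpY.
  apply: count_one (inl p) _ => w; rewrite in3; split.
  + case=> /G1r H1 /G1r H2 _; case: w H1 H2 => // p' H1 H2.
    by congr inl; apply: (uniq2 HQ (X:=X) (Y:=Y)) => // E; apply: nYX.
  + by move=> ->; split; apply/G1r.
Qed.

Lemma not2hom : ~ two_Y_homogeneous adj blocks.
Proof.
move=> [D [HD [Hecc Hh]]].
have [p0 _] := a_point HS Hr.
have [X HpX] := @other_block _ _ _ _ _ _ _ _ _ HS Hr p0 set0 ltac:(by rewrite cards0).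
move=> _.
have Hk : 2 <= k.
  case: (leqP k 1) => // Hk; exfalso.
  by apply: (k1_no_ecc HS Hr Hk (X:=X) (D:=D)); apply: Hecc; rewrite inE.
have D4 := Dge4 Hecc HD.
have Hgq := gq_of_hom2 Hk (Hh 2 ltac:(apply/andP; split; lia)).
have [_ _ _ Hg] := Hgq.
have [c Hc] := Hh 3 ltac:(apply/andP; split; lia).
have [Y HpY] := @other_block _ _ _ _ _ _ _ _ _ HS Hr p0 [set X] ltac:(by rewrite cards1).
rewrite inE => /eqP nYX.
have [W HpW] := @other_block _ _ _ _ _ _ _ _ _ HS Hr p0 [set X; Y] ltac:(have := cards2 X Y; lia).
rewrite !inE negb_or => /andP [/eqP nWX /eqP nWY].
have [z1 Hz1W] := @other_point _ _ _ _ _ _ _ _ _ HS Hr W [set p0] ltac:(rewrite cards1; lia).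
rewrite inE => /eqP nz1.
have [a HaX] := @other_point _ _ _ _ _ _ _ _ _ HS Hr X [set p0] ltac:(rewrite cards1; lia).
rewrite inE => /eqP nap.
have [w Haw] := @other_block _ _ _ _ _ _ _ _ _ HS Hr a [set X] ltac:(by rewrite cards1).
rewrite inE => /eqP nwX.
have [z2 Hz2w] := @other_point _ _ _ _ _ _ _ _ _ HS Hr w [set a] ltac:(rewrite cards1; lia).
rewrite inE => /eqP nz2a.
have z1X : ~ I z1 X.
  by move=> H; apply: nz1; apply: (uniq2 HQ (X:=W) (Y:=X)) => // E; apply: nWX.
have z1Y : ~ I z1 Y.
  by move=> H; apply: nz1; apply: (uniq2 HQ (X:=W) (Y:=Y)) => // E; apply: nWY.
have z2X : ~ I z2 X.
  by move=> H; apply: nz2a; apply: (uniq2 HQ (X:=w) (Y:=X)) => // E; apply: nwX.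
have noncol : forall V, I z2 V -> I p0 V -> False.
  move=> V H1 H2.
  have z2X' : ~~ I z2 X by apply/negP.
  have E : w = V.
    apply: (@card1_eq _ [set Z | I z2 Z && [exists q, I q Z && I q X]]).
    * by rewrite Hg.
    * by rewrite inE Hz2w /=; apply/existsP; exists a; rewrite Haw HaX.
    * by rewrite inE H1 /=; apply/existsP; exists p0; rewrite H2 HpX.
  subst V; apply: nap; apply: (uniq2 HQ (X:=w) (Y:=X)) => // E; apply: nwX.
have z2Y : ~ I z2 Y by move=> H; apply: (noncol Y).
have Hx : inr X \in blocks by rewrite inE.
have Hy : inr Y \in Gamma_i adj (inr X) 2.
  by apply/G2r; exists Y; split=> //; exists p0.
have C1 := Hc _ _ (inl z1) Hx Hy
  ltac:(by apply/G3l; split=> //; exists W, p0)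
  ltac:(by apply/G3l; split=> //; exists W, p0).
have z2Y' : ~~ I z2 Y by apply/negP.
have [Z] := @card_pick _ [set Z | I z2 Z && [exists p, I p Z && I p Y]] ltac:(rewrite Hg //).
rewrite inE => /andP [HZ /existsP [p /andP [H1 H2]]].
have C2 := Hc _ _ (inl z2) Hx Hy
  ltac:(by apply/G3l; split=> //; exists w, a)
  ltac:(by apply/G3l; split=> //; exists Z, p).
rewrite /= in C1 C2.
have E1 : #|Gamma_i adj (inr X) 1 :&: Gamma_i adj (inr Y) 1 :&: Gamma_i adj (inl z1) 2| = 1.
  apply: count_one (inl p0) _ => u; rewrite in3; split.
  - case=> /G1r H3 /G1r H4 _; case: u H3 H4 => // p' H3 H4.
    by congr inl; apply: (uniq2 HQ (X:=X) (Y:=Y)) => // E; apply: nYX.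
  - move=> ->; split; try by apply/G1r.
    apply/G2p; split; first by move=> E; apply: nz1.
    by exists W.
have E2 : #|Gamma_i adj (inr X) 1 :&: Gamma_i adj (inr Y) 1 :&: Gamma_i adj (inl z2) 2| = 0.
  apply: count_zero => u; rewrite in3.
  case=> /G1r H3 /G1r H4; case: u H3 H4 => // p' H3 H4.
  have E : p' = p0 by apply: (uniq2 HQ (X:=X) (Y:=Y)) => // E; apply: nYX.
  rewrite E => /G2p [_ [V [H5 H6]]]; exact: noncol H5 H6.
by rewrite C1 in E1; rewrite C2 E1 in E2.
Qed.

End Main.

Theorem proposition4p13 (P B : finType) (I : P -> B -> bool)
    (v b r k lam1 t : nat) :
  is_SPBIBD I v b r k lam1 0 (k - 1) t ->
  quasi_symmetric I 0 1 ->
  3 <= r ->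
  (almost_2_Y_homogeneous (incidence_adj I) (block_vertices P B)
     <-> generalized_quadrangle I r k) /\
  ~ two_Y_homogeneous (incidence_adj I) (block_vertices P B).
Proof.
move=> HS HQ Hr; split; last exact: not2hom HS HQ Hr.
split; last exact: hom_of_gq HS HQ Hr.
move=> [D [HD [Hecc Hh]]].
have [p0 _] := a_point HS Hr.
have [X HpX _] := @other_block _ _ _ _ _ _ _ _ _ HS Hr p0 set0 ltac:(by rewrite cards0).
have Hk : 2 <= k.
  case: (leqP k 1) => // Hk; exfalso.
  by apply: (k1_no_ecc HS Hr Hk (X:=X) (D:=D)); apply: Hecc; rewrite inE.
have D4 := Dge4 HQ Hecc HD.
exact: gq_of_hom2 HS HQ Hr Hk (Hh 2 ltac:(apply/andP; split; lia)).
Qed.
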